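(* Let $m,p,k$ be positive integers, let $W \in \mathbb{R}^{m\times p}$, $\vec{x}\in\mathbb{R}^p$, let $\Theta$ be a real matrix with $k$ columns, let $f_m$ be a fixed function defined on $\{-1,+1\}^m$ with values in real vectors of length equal to the number of rows of $\Theta$, let $y$ be a target value, and let $\ell$ be a real-valued loss function such that $\ell(\Theta^{\top} f_m(\vec{g}), y)\in\mathbb{R}$ is defined for every $\vec{g}\in\{-1,+1\}^m$. Then for all real numbers $a > b > 0$, \[ \max_{\vec{g} \in \{-1,+1\}^m}\Big(a\,\vec{g}^{\top}W\vec{x} + \ell(\Theta^{\top} f_m(\vec{g}), y)\Big) - \max_{\vec{h} \in \{-1,+1\}^m} \big( a\,\vec{h}^{\top}W\vec{x} \big) \;\le\; \max_{\vec{g} \in \{-1,+1\}^m}\Big( b\,\vec{g}^{\top}W\vec{x} + \ell(\Theta^{\top} f_m(\vec{g}), y)\Big) - \max_{\vec{h} \in \{-1,+1\}^m} \big( b\,\vec{h}^{\top}W\vec{x} \big). \]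
   Context: This arises in learning oblique decision trees: the $m$ rows of $W$ are the split hyperplanes of the $m$ internal nodes of a binary tree, $\operatorname{sign}(W\vec{x})=\arg\max_{\vec{h}\in\{-1,+1\}^m}\vec{h}^\top W\vec{x}$ gives the split decisions, $f_m(\vec{g})$ is the indicator vector of the leaf reached given the binary split decisions $\vec{g}$, $\Theta$ contains the leaf parameters (one row per leaf), and $\ell$ is the loss of the prediction $\Theta^\top f_m(\vec{g})$ against target $y$. The right-hand-side quantity with scale $1$ is an upper bound on $\ell(\Theta^\top f_m(\operatorname{sign}(W\vec{x})),y)$; the proposition says this bound becomes tighter (smaller) as $W$ is scaled up. *)

(* Defs.v *)
From HB Require Import structures.
From mathcomp Require Import all_boot all_order all_algebra.
From mathcomp Require Import reals.
Set Implicit Arguments. Unset Strict Implicit. Unset Printing Implicit Defensive.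
Import Order.TTheory GRing.Theory Num.Theory.
Local Open Scope ring_scope.

(* The finite set {-1,+1}^m, encoded by the finite type of boolean
   functions on 'I_m (true ↦ +1, false ↦ -1). *)
Definition signs (m : nat) := {ffun 'I_m -> bool}.

Definition signvec (R : ringType) (m : nat) (g : signs m) : 'cV[R]_m :=
  \col_i (if g i then 1 else -1).

(* Maximum of a real-valued function over the (nonempty) finite set
   {-1,+1}^m.  The seed F [ffun=> true] is itself one of the values,
   so this is exactly the maximum. *)
Definition max_signs (R : realDomainType) (m : nat) (F : signs m -> R) : R :=
  \big[Num.max/F [ffun=> true]]_(g : signs m) F g.

Definition bilin (R : ringType) (m p : nat) (g : signs m)
    (W : 'M[R]_(m, p)) (x : 'cV[R]_p) : R :=
  ((signvec R g)^T *m W *m x) 0 0.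

(* Main.v *)
Require Import Defs.
From HB Require Import structures.
From mathcomp Require Import all_boot all_order all_algebra.
From mathcomp Require Import reals.
From mathcomp Require Import lra.
Import Order.TTheory GRing.Theory Num.Theory.
Local Open Scope ring_scope.

Lemma big_max_ub (R : realDomainType) (T : eqType) (F : T -> R) (x0 : R) (g : T) r :
  g \in r -> F g <= \big[Num.max/x0]_(i <- r) F i.
Proof.
elim: r => [//|i r IH]; rewrite inE big_cons => /orP[/eqP->|/IH h].
  by rewrite le_max lexx.
by rewrite le_max h orbT.
Qed.

Lemma big_max_ex (R : realDomainType) (T : eqType) (F : T -> R) (x0 : R) r :
  \big[Num.max/x0]_(i <- r) F i = x0 \/ exists i, \big[Num.max/x0]_(i <- r) F i = F i.
Proof.
elim: r => [|i r IH]; first by rewrite big_nil; left.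
rewrite big_cons /Num.max; case: ltP => _; last by right; exists i.
exact: IH.
Qed.

Lemma ms_ub (R : realDomainType) m (F : signs m -> R) g : F g <= max_signs F.
Proof. by apply: big_max_ub; rewrite mem_index_enum. Qed.

Lemma ms_ex (R : realDomainType) m (F : signs m -> R) : exists g, max_signs F = F g.
Proof.
rewrite /max_signs; case: (@big_max_ex R _ F (F [ffun=> true]) (index_enum _)).
  by move=> ->; exists [ffun=> true].
by move=> [i ->]; exists i.
Qed.

Theorem proposition1 (R : realType) (m p k n : nat) (Y : Type)
    (hm : (0 < m)%N) (hp : (0 < p)%N) (hk : (0 < k)%N)
    (W : 'M[R]_(m, p)) (x : 'cV[R]_p) (Theta : 'M[R]_(n, k))
    (f : signs m -> 'cV[R]_n) (y : Y) (loss : 'cV[R]_k -> Y -> R)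
    (a b : R) (hb : 0 < b) (hab : b < a) :
  max_signs (fun g => a * bilin g W x + loss (Theta^T *m f g) y)
    - max_signs (fun h => a * bilin h W x)
  <= max_signs (fun g => b * bilin g W x + loss (Theta^T *m f g) y)
    - max_signs (fun h => b * bilin h W x).
Proof.
have [g0 ->] := ms_ex _ _ (fun g => a * bilin g W x + loss (Theta^T *m f g) y).
have [h1 Eh] := ms_ex _ _ (fun h => b * bilin h W x).
rewrite Eh.
have H1 := ms_ub _ _ (fun h => a * bilin h W x) h1.
have H2 := ms_ub _ _ (fun g => b * bilin g W x + loss (Theta^T *m f g) y) g0.
have H3 := ms_ub _ _ (fun h => b * bilin h W x) g0.
rewrite Eh /= in H3.
have H4 : bilin g0 W x <= bilin h1 W x by rewrite -(ler_pM2l hb).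
move: H1 H2 => /= H1 H2.
set L := loss _ _ in H2 *.
set A := max_signs _ in H1 *.
set B := max_signs _ in H2 *.
have H5 : (a - b) * (bilin g0 W x - bilin h1 W x) <= 0.
  by rewrite mulr_ge0_le0 // ?subr_ge0 ?subr_le0 // ltW.
lra.
Qed.
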